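(* Let $Q=(E_0,E_1,\mathbf U,\boldsymbol\alpha)$ be a quiver representation over $\mathbb{F}_q$, let $a,b\in E_0$, let $Q'=\Omega(Q,a,b)$ and $\pi=\pi^{Q'}_Q$. Let $\mathbf X\in\operatorname{End}(Q)$ and let $H$ be a subgroup of $\operatorname{Aut}(Q)$ fixing $\mathbf X$ under conjugation. Then $$\gamma\big(H^{Q'},\pi^{-1}(\mathbf X)\big)=\gamma\big(H,\mathcal I(X_a,X_b)\big),$$ where $H^{Q'}$ acts on $\pi^{-1}(\mathbf X)\subseteq\operatorname{End}(Q')$ by conjugation and $H$ acts on $\mathcal I(X_a,X_b)$ by $\mathbf g\cdot R=g_bRg_a^{-1}$.
   Context: $\gamma(G,X)$ is the number of orbits of a group $G$ on a finite set $X$. A quiver representation $Q=(E_0,E_1,\mathbf U,\boldsymbol\alpha)$: finite sets $E_0$ (vertices), $E_1$ (arrows), source/target maps $\sigma,\tau:E_1\to E_0$, finite-dimensional spaces $U_c$ ($c\in E_0$), linear maps $\alpha_e:U_{\sigma(e)}\to U_{\tau(e)}$. $\operatorname{End}(Q)$ is the ring of tuples $(X_c)_{c\in E_0}$, $X_c\in\operatorname{End}(U_c)$, with $\alpha_eX_{\sigma(e)}=X_{\tau(e)}\alpha_e$ for all $e$; $\operatorname{Aut}(Q)$ is its unit group, acting on $\operatorname{End}(Q)$ by componentwise conjugation. $Q'$ is an extension of $Q$ if its vertex set contains $E_0$, its spaces at $E_0$ coincide with those of $Q$, and restriction of any endomorphism of $Q'$ to $E_0$ is an endomorphism of $Q$;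 then $\pi^{Q'}_Q$ is this restriction map, and for $H\le\operatorname{Aut}(Q)$, $H^{Q'}=\pi^{-1}(H)\cap\operatorname{Aut}(Q')$. $\Omega(Q,a,b)$ is the extension obtained from $Q$ by adding a new vertex $c$ with a space $U'_c$ of dimension $\dim U_a+\dim U_b$ and two arrows $e_1:a\to c$, $e_2:c\to b$ whose maps form a short exact sequence $0\to U_a\to U'_c\to U_b\to 0$ (first injective, second surjective, image of first = kernel of second). $\mathcal I(X_a,X_b)=\{S\in\operatorname{Hom}(U_a,U_b):SX_a=X_bS\}$. *)

(* Defs.v *)
From HB Require Import structures.
From mathcomp Require Import all_boot all_order all_algebra.
Set Implicit Arguments. Unset Strict Implicit. Unset Printing Implicit Defensive.
Import GRing.Theory.
Local Open Scope ring_scope.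

(* Convention: linear maps U -> V with dim U = m, dim V = n are matrices
   'M_(m, n) acting on ROW vectors (v |-> v *m A).  Hence the composite
   f o g is represented by (matrix of g) *m (matrix of f). *)

Record quiverRep (F : finFieldType) := QuiverRep {
  qV : finType;
  qA : finType;
  qsrc : qA -> qV;
  qtgt : qA -> qV;
  qdim : qV -> nat;
  qmap : forall e : qA, 'M[F]_(qdim (qsrc e), qdim (qtgt e))
}.

Definition tupleT (F : finFieldType) (Q : quiverRep F) :=
  {dffun forall c : qV Q, 'M[F]_(@qdim _ Q c)}.

Section Ops.
Variables (F : finFieldType) (Q : quiverRep F).

Definition isEnd (X : tupleT Q) : bool :=
  [forall e : qA Q, X (qsrc e) *m qmap e == qmap e *m X (qtgt e)].

Definition EndQ : {set tupleT Q} := [set X | isEnd X].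

Definition oneT : tupleT Q := [ffun c => 1%:M].
Definition mulT (g h : tupleT Q) : tupleT Q := [ffun c => h c *m g c].
Definition invT (g : tupleT Q) : tupleT Q := [ffun c => invmx (g c)].

Definition AutQ : {set tupleT Q} :=
  [set X in EndQ | [exists Y in EndQ, (mulT X Y == oneT) && (mulT Y X == oneT)]].

Definition conjT (g Y : tupleT Q) : tupleT Q :=
  [ffun c => invmx (g c) *m Y c *m g c].

Definition isSubgroupAut (H : {set tupleT Q}) : Prop :=
  [/\ H \subset AutQ, oneT \in H,
      (forall g h, g \in H -> h \in H -> mulT g h \in H) &
      (forall g, g \in H -> invT g \in H)].

Definition Iset (X : tupleT Q) (a b : qV Q) : {set 'M[F]_(@qdim _ Q a, @qdim _ Q b)} :=
  [set S | X a *m S == S *m X b].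

Definition actI (a b : qV Q) (g : tupleT Q) (R : 'M[F]_(@qdim _ Q a, @qdim _ Q b)) :=
  invmx (g a) *m R *m g b.

End Ops.

Definition norbits (gT T : finType) (G : {set gT}) (act : gT -> T -> T)
  (S : {set T}) : nat :=
  #|[set [set act g x | g in G] | x in S]|.

(* Omega(Q, a, b): add vertex c (= None) with space of dim dim U_a + dim U_b,
   arrows e_1 : a -> c (matrix i) and e_2 : c -> b (matrix p). *)
Section Omega.
Variables (F : finFieldType) (Q : quiverRep F) (a b : qV Q).

Definition om_dim (o : option (qV Q)) : nat :=
  match o with Some c => @qdim _ Q c | None => (@qdim _ Q a + @qdim _ Q b)%N end.
Definition om_src (e : (qA Q + bool)%type) : option (qV Q) :=
  match e with inl e1 => Some (qsrc e1) | inr true => Some a | inr false => None end.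
Definition om_tgt (e : (qA Q + bool)%type) : option (qV Q) :=
  match e with inl e1 => Some (qtgt e1) | inr true => None | inr false => Some b end.

Variables (i : 'M[F]_(@qdim _ Q a, @qdim _ Q a + @qdim _ Q b))
          (p : 'M[F]_(@qdim _ Q a + @qdim _ Q b, @qdim _ Q b)).

Definition om_map (e : (qA Q + bool)%type) : 'M[F]_(om_dim (om_src e), om_dim (om_tgt e)) :=
  match e as e0 return 'M[F]_(om_dim (om_src e0), om_dim (om_tgt e0)) with
  | inl e1 => qmap e1
  | inr bb => if bb as b0 return 'M[F]_(om_dim (om_src (inr b0)), om_dim (om_tgt (inr b0)))
              then i else p
  end.

Definition Omega : quiverRep F :=
  @QuiverRep F (option (qV Q)) (qA Q + bool)%type om_src om_tgt om_dim om_map.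

Definition piOm (Y : tupleT Omega) : tupleT Q := [ffun c => Y (Some c)].

Definition liftGroup (H : {set tupleT Q}) : {set tupleT Omega} :=
  [set g in AutQ Omega | piOm g \in H].

Definition fibre (X : tupleT Q) : {set tupleT Omega} :=
  [set Y in EndQ Omega | piOm Y == X].

End Omega.

(* Main.v *)
Require Import Defs.
From HB Require Import structures.
From mathcomp Require Import all_boot all_order all_algebra.
Set Implicit Arguments. Unset Strict Implicit. Unset Printing Implicit Defensive.
Import GRing.Theory.

Section Burnside.
Variables (gT T : finType) (G : {set gT}) (mul : gT -> gT -> gT) (inv : gT -> gT)
  (one : gT) (act : gT -> T -> T) (S : {set T}).
Hypotheses (G1 : one \in G) (GM : forall g h, g \in G -> h \in G -> mul g h \in G)
  (GV : forall g, g \in G -> inv g \in G)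
  (mulA : forall g h k, g \in G -> h \in G -> k \in G -> mul g (mul h k) = mul (mul g h) k)
  (mul1g : forall g, g \in G -> mul one g = g)
  (mulVg : forall g, g \in G -> mul (inv g) g = one)
  (mulgV : forall g, g \in G -> mul g (inv g) = one)
  (actM : forall g h x, g \in G -> h \in G -> x \in S -> act (mul g h) x = act g (act h x))
  (act1 : forall x, x \in S -> act one x = x)
  (actS : forall g x, g \in G -> x \in S -> act g x \in S).

Let orb x := [set act g x | g in G].
Let stab x := [set g in G | act g x == x].

Lemma orb_eq x y : x \in S -> y \in orb x -> orb y = orb x.
Proof.
move=> xS /imsetP[g0 g0G ->]; apply/setP=> z; apply/imsetP/imsetP=> [[g gG ->]|[g gG ->]].
  by exists (mul g g0); [exact: GM | rewrite actM].
exists (mul g (inv g0)); first by apply: GM => //; apply: GV.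
rewrite actM ?GV ?actS // -(actM (GV g0G)) // mulVg // act1 //.
Qed.

Lemma orb_stab x : x \in S -> (#|stab x| * #|orb x| = #|G|)%N.
Proof.
move=> xS.
symmetry; rewrite -sum1_card (partition_big_imset (fun g => act g x)) /=.
rewrite mulnC -sum_nat_const; apply: eq_bigr => y /imsetP[g0 g0G ->].
have -> : \sum_(i in G | act i x == act g0 x) 1 = #|[set g in G | act g x == act g0 x]|.
  by rewrite -sum1_card; apply: eq_bigl => g; rewrite inE.
have inj1 : {in stab x &, injective (mul g0)}.
  move=> h h' /setIdP[hG _] /setIdP[h'G _] e.
  by rewrite -(mul1g hG) -(mul1g h'G) -(mulVg g0G) -!mulA ?GV // e.
have im1 : mul g0 @: stab x = [set g in G | act g x == act g0 x].
  apply/setP=> g; apply/imsetP/setIdP=> [[h /setIdP[hG /eqP hx] ->]|[gG /eqP gx]].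
    by split; [exact: GM | rewrite actM // hx].
  exists (mul (inv g0) g); last by rewrite mulA ?GV // mulgV // mul1g.
  rewrite inE GM ?GV //= actM ?GV // gx -actM ?GV // mulVg // act1 //.
by rewrite -im1 card_in_imset.
Qed.

Lemma burnside :
  (norbits G act S * #|G| = \sum_(g in G) #|[set x in S | act g x == x]|)%N.
Proof.
have -> : \sum_(g in G) #|[set x in S | act g x == x]| = \sum_(x in S) #|stab x|.
  rewrite (eq_bigr (fun g => \sum_(x in S) (act g x == x : nat))); last first.
    move=> g _; rewrite -sum1_card big_mkcond /= [RHS]big_mkcond /=.
    by apply: eq_bigr => x _; rewrite inE; case: (x \in S); case: (act g x == x).
  rewrite exchange_big /=; apply: eq_bigr => x _.
  rewrite -sum1_card [RHS]big_mkcond /= [LHS]big_mkcond /=.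
  by apply: eq_bigr => g _; rewrite inE; case: (g \in G); case: (act g x == x).
rewrite (partition_big_imset orb) /= /norbits -/orb -sum_nat_const.
apply: eq_bigr => O /imsetP[x0 x0S ->].
have -> : \sum_(x in S | orb x == orb x0) #|stab x| = \sum_(x in orb x0) (#|G| %/ #|orb x0|).
  apply: eq_big => [x|x /andP[xS /eqP ox]].
    apply/andP/idP=> [[xS /eqP <-]|xo].
      by apply/imsetP; exists one => //; rewrite act1.
    have xS : x \in S by case/imsetP: xo => g gG ->; exact: actS.
    by rewrite xS (orb_eq x0S xo).
  rewrite -ox -(orb_stab xS) mulnK //.
  by apply/card_gt0P; exists x; apply/imsetP; exists one => //; rewrite act1.
rewrite sum_nat_const -(orb_stab x0S) mulnK; first by rewrite mulnC.
by apply/card_gt0P; exists x0; apply/imsetP; exists one => //; rewrite act1.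
Qed.
End Burnside.

Local Open Scope ring_scope.

Section LinCount.
Variable F : finFieldType.

Lemma card_rowspace m n (B : 'M[F]_(m, n)) :
  #|[set v : 'rV[F]_n | (v <= B)%MS]| = (#|F| ^ \rank B)%N.
Proof.
have -> : [set v : 'rV[F]_n | (v <= B)%MS] = [set u *m row_base B | u : 'rV[F]_(\rank B)].
  apply/setP=> v; rewrite inE -(eq_row_base B); apply/idP/imsetP=> [/submxP[u ->]|[u _ ->]].
    by exists u.
  exact: submxMl.
rewrite card_imset; first by rewrite card_mx mul1n.
exact: row_free_inj (row_base_free B).
Qed.

Lemma card_ker m n (A : 'M[F]_(m, n)) :
  #|[set v : 'rV[F]_m | v *m A == 0]| = (#|F| ^ (m - \rank A))%N.
Proof.
rewrite -mxrank_ker -card_rowspace; apply: eq_card => v; rewrite !inE.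
by rewrite sub_kermx.
Qed.

Lemma dual_card m n (A : 'M[F]_(m, n)) :
  muln #|[set v : 'rV[F]_m | v *m A == 0]| (expn #|F| n) =
   muln #|[set u : 'rV[F]_n | u *m A^T == 0]| (expn #|F| m).
Proof.
rewrite !card_ker mxrank_tr -!expnD; congr (_ ^ _)%N.
have h1 := rank_leq_row A; have h2 := rank_leq_col A.
by rewrite addnC addnBA // [RHS]addnC addnBA // addnC.
Qed.
End LinCount.

Section Pair.
Variable F : fieldType.

Lemma vec_pair m n (P Z : 'M[F]_(m, n)) :
  mxvec P *m (mxvec Z)^T = (\tr (P *m Z^T))%:M.
Proof.
apply/matrixP=> x y; rewrite !ord1 !mxE /= mulr1n.
rewrite (reindex _ (curry_mxvec_bij m n)) /=.
rewrite /mxtrace (eq_bigr (fun i => \sum_j P i j * Z i j)); last first.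
  by move=> i _; rewrite mxE; apply: eq_bigr => j _; rewrite mxE.
rewrite pair_bigA /=; apply: eq_bigr => -[i j] _ /=.
by rewrite !mxE mxvecE -[mxvec Z (_ : 'I_1) _]/(mxvec Z 0 (mxvec_index i j)) mxvecE.
Qed.

Lemma trace_zero m n (Y : 'M[F]_(m, n)) :
  (forall K : 'M[F]_(n, m), \tr (K *m Y) = 0) -> Y = 0.
Proof.
move=> hK; apply/matrixP=> i j; rewrite mxE.
have := hK (delta_mx j i).
rewrite -(mul_delta_mx (0 : 'I_1)) -mulmxA -rowE mxtrace_mulC -colE.
by rewrite /mxtrace big_ord1 !mxE.
Qed.
End Pair.

Lemma inv_uniq (F : fieldType) n (A B : 'M[F]_n) : A *m B = 1%:M -> invmx A = B.
Proof.
move=> AB; have [Au _] := mulmx1_unit AB.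
by rewrite -[B](mulKmx Au) AB mulmx1.
Qed.

Section Grp.
Variables (F : finFieldType) (Q0 : quiverRep F).
Implicit Types g h X Y : tupleT Q0.

Lemma endM X Y : X \in EndQ Q0 -> Y \in EndQ Q0 -> mulT X Y \in EndQ Q0.
Proof.
rewrite !inE => /forallP hX /forallP hY; apply/forallP=> e; rewrite !ffunE.
by rewrite -mulmxA (eqP (hX e)) mulmxA (eqP (hY e)) mulmxA.
Qed.

Lemma end1 : oneT Q0 \in EndQ Q0.
Proof. by rewrite inE; apply/forallP=> e; rewrite !ffunE mul1mx mulmx1. Qed.

Lemma autP g : g \in AutQ Q0 ->
  [/\ g \in EndQ Q0, invT g \in EndQ Q0 & forall c, g c \in unitmx].
Proof.
case/setIdP=> gE /existsP[Y /andP[YE /andP[/eqP gY /eqP Yg]]].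
have hc c : Y c *m g c = 1%:M by have := congr1 (fun t : tupleT Q0 => t c) gY; rewrite !ffunE.
have gu c : g c \in unitmx by case: (mulmx1_unit (hc c)).
have -> : invT g = Y.
  apply/ffunP=> c; rewrite ffunE; apply: inv_uniq; exact: mulmx1C.
by [].
Qed.

Lemma mulTA g h X : mulT g (mulT h X) = mulT (mulT g h) X.
Proof. by apply/ffunP=> c; rewrite !ffunE mulmxA. Qed.

Lemma mul1T g : mulT (oneT Q0) g = g.
Proof. by apply/ffunP=> c; rewrite !ffunE mulmx1. Qed.

Lemma mulT1 g : mulT g (oneT Q0) = g.
Proof. by apply/ffunP=> c; rewrite !ffunE mul1mx. Qed.

Lemma mulVT g : (forall c, g c \in unitmx) -> mulT (invT g) g = oneT Q0.
Proof. by move=> gu; apply/ffunP=> c; rewrite !ffunE mulmxV. Qed.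

Lemma mulTV g : (forall c, g c \in unitmx) -> mulT g (invT g) = oneT Q0.
Proof. by move=> gu; apply/ffunP=> c; rewrite !ffunE mulVmx. Qed.

Lemma autM g h : g \in AutQ Q0 -> h \in AutQ Q0 -> mulT g h \in AutQ Q0.
Proof.
move=> /autP[gE giE gu] /autP[hE hiE hu].
rewrite inE endM //=; apply/existsP; exists (mulT (invT h) (invT g)).
rewrite endM //= -mulTA [mulT h _]mulTA mulTV // mul1T mulTV //.
by rewrite -mulTA [mulT (invT g) _]mulTA mulVT // mul1T mulVT // !eqxx.
Qed.

Lemma autV g : g \in AutQ Q0 -> invT g \in AutQ Q0.
Proof.
move=> /autP[gE giE gu]; rewrite inE giE /=; apply/existsP; exists g.
by rewrite gE mulVT // mulTV // !eqxx.
Qed.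

Lemma aut1 : oneT Q0 \in AutQ Q0.
Proof.
by rewrite inE end1 /=; apply/existsP; exists (oneT Q0); rewrite end1 mul1T eqxx.
Qed.

Lemma conjM g h Y : (forall c, g c \in unitmx) -> (forall c, h c \in unitmx) ->
  conjT (mulT g h) Y = conjT g (conjT h Y).
Proof.
move=> gu hu; apply/ffunP=> c; rewrite !ffunE.
have -> : invmx (h c *m g c) = invmx (g c) *m invmx (h c).
  apply: inv_uniq; rewrite -mulmxA (mulmxA (g c)) mulmxV // mul1mx mulmxV //.
by rewrite !mulmxA.
Qed.

Lemma conj1 Y : conjT (oneT Q0) Y = Y.
Proof. by apply/ffunP=> c; rewrite !ffunE invmx1 mul1mx mulmx1. Qed.

Lemma conj_end g Y : g \in AutQ Q0 -> Y \in EndQ Q0 -> conjT g Y \in EndQ Q0.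
Proof.
move=> /autP[gE giE gu] YE.
have -> : conjT g Y = mulT g (mulT Y (invT g)).
  by apply/ffunP=> c; rewrite !ffunE.
by rewrite !endM.
Qed.

Lemma sub_aut_unit G g : isSubgroupAut G -> g \in G -> forall c, g c \in unitmx.
Proof. by case=> sGA _ _ _ gG; case/autP: (subsetP sGA g gG). Qed.

End Grp.

Lemma splitting (F : fieldType) ma mb (i : 'M[F]_(ma, ma + mb)) (p : 'M[F]_(ma + mb, mb)) :
  row_free i -> row_full p -> (i == kermx p)%MS ->
  exists r s, [/\ i *m r = 1%:M, i *m p = 0, s *m r = 0, s *m p = 1%:M &
                  r *m i + p *m s = 1%:M].
Proof.
move=> fi fp /andP[ik ki]; have [s sp] := row_fullP fp.
have ip : i *m p = 0 by apply/sub_kermxP.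
have hk : (1%:M - p *m s <= i)%MS.
  apply: submx_trans ki; apply/sub_kermxP.
  by rewrite mulmxBl mul1mx -mulmxA sp mulmx1 subrr.
set r := (1%:M - p *m s) *m pinvmx i.
have ri : r *m i = 1%:M - p *m s by rewrite /r mulmxKpV.
exists r, s; split=> //.
- apply: (row_free_inj fi); rewrite -mulmxA ri mul1mx mulmxBr mulmx1 mulmxA ip mul0mx.
  by rewrite subr0.
- apply: (row_free_inj fi); rewrite -mulmxA ri mul0mx mulmxBr mulmx1 mulmxA sp mul1mx.
  by rewrite subrr.
- by rewrite ri subrK.
Qed.

Section Main.
Variables (F : finFieldType) (Q : quiverRep F) (a b : qV Q).
Local Notation ma := (@qdim _ Q a).
Local Notation mb := (@qdim _ Q b).
Variables (i : 'M[F]_(ma, ma + mb)) (p : 'M[F]_(ma + mb, mb))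
  (r : 'M[F]_(ma + mb, ma)) (s : 'M[F]_(mb, ma + mb)).
Hypotheses (ir : i *m r = 1%:M) (ip : i *m p = 0) (sr : s *m r = 0) (sp : s *m p = 1%:M)
  (rips : r *m i + p *m s = 1%:M).

Lemma irK k (M : 'M[F]_(k, ma)) : M *m i *m r = M.
Proof. by rewrite -mulmxA ir mulmx1. Qed.
Lemma ip0 k (M : 'M[F]_(k, ma)) : M *m i *m p = 0.
Proof. by rewrite -mulmxA ip mulmx0. Qed.
Lemma sr0 k (M : 'M[F]_(k, mb)) : M *m s *m r = 0.
Proof. by rewrite -mulmxA sr mulmx0. Qed.
Lemma spK k (M : 'M[F]_(k, mb)) : M *m s *m p = M.
Proof. by rewrite -mulmxA sp mulmx1. Qed.

Definition sh (A : 'M[F]_ma) (B : 'M[F]_(mb, ma)) (D : 'M[F]_mb) : 'M[F]_(ma + mb) :=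
  r *m A *m i + p *m B *m i + p *m D *m s.

Lemma shM A B D A' B' D' :
  sh A B D *m sh A' B' D' = sh (A *m A') (B *m A' + D *m B') (D *m D').
Proof.
rewrite /sh !mulmxDr !mulmxDl !mulmxA !irK !ip0 !sr0 !spK !mul0mx !addr0 !add0r.
by rewrite !addrA.
Qed.

Lemma sh1 : sh 1%:M 0 1%:M = 1%:M.
Proof. by rewrite /sh !mulmx1 mulmx0 mul0mx addr0. Qed.

Lemma sh_i A B D : i *m sh A B D = A *m i.
Proof.
rewrite /sh !mulmxDr !mulmxA ir mul1mx ip !mul0mx !addr0.
by [].
Qed.

Lemma sh_p A B D : sh A B D *m p = p *m D.
Proof. by rewrite /sh !mulmxDl ip0 spK ip0 !add0r. Qed.

Lemma sh_B A B D : s *m sh A B D *m r = B.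
Proof.
rewrite /sh !mulmxDr !mulmxDl !mulmxA sr !mul0mx !add0r sp mul1mx irK sr0 addr0.
by [].
Qed.

Lemma sh_A A B D : i *m sh A B D *m r = A.
Proof. by rewrite sh_i irK. Qed.

Lemma sh_D A B D : s *m sh A B D *m p = D.
Proof. by rewrite -mulmxA sh_p mulmxA sp mul1mx. Qed.

Lemma sh_inj A B D A' B' D' : sh A B D = sh A' B' D' -> [/\ A = A', B = B' & D = D'].
Proof.
by move=> e; split; [rewrite -(sh_A A B D) e sh_A | rewrite -(sh_B A B D) e sh_B
  | rewrite -(sh_D A B D) e sh_D].
Qed.

Lemma sh_eq Y A D : i *m Y = A *m i -> Y *m p = p *m D -> Y = sh A (s *m Y *m r) D.
Proof.
move=> iY Yp.
have e1 : Y = Y *m r *m i + p *m D *m s.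
  by rewrite -[LHS]mulmx1 -rips mulmxDr !mulmxA Yp.
have e2 : Y *m r = r *m A + p *m (s *m Y *m r).
  by rewrite -[LHS]mul1mx -rips mulmxDl -!mulmxA (mulmxA i) iY -mulmxA ir mulmx1 !mulmxA.
by rewrite /sh {1}e1 e2 mulmxDl !mulmxA.
Qed.

Local Notation Om := (Omega i p).

Definition ext (h : tupleT Q) (M : 'M[F]_(ma + mb)) : tupleT Om :=
  [ffun c : option (qV Q) => match c return 'M[F]_(om_dim a b c) with
                | Some c' => h c' | None => M end].

Lemma ext_Some h M c : ext h M (Some c) = h c.
Proof. by rewrite ffunE. Qed.
Lemma ext_None h M : ext h M None = M.
Proof. by rewrite ffunE. Qed.
Lemma pi_ext h M : piOm (ext h M) = h.
Proof. by apply/ffunP=> c; rewrite !ffunE. Qed.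
Lemma ext_eta (Y : tupleT Om) : Y = ext (piOm Y) (Y None).
Proof. by apply/ffunP=> -[c|]; rewrite !ffunE. Qed.

Lemma endOm (Y : tupleT Om) : (Y \in EndQ Om) =
  [&& piOm Y \in EndQ Q, Y (Some a) *m i == i *m Y None & Y None *m p == p *m Y (Some b)].
Proof.
rewrite !inE; apply/forallP/and3P=> [h|[/forallP h1 h2 h3]].
  split; [apply/forallP=> e; rewrite !ffunE; exact: (h (inl e)) | exact: (h (inr true))
     | exact: (h (inr false))].
case=> [e|[]] //=; by have := h1 e; rewrite !ffunE.
Qed.

Lemma pi_mulT (g h : tupleT Om) : piOm (mulT g h) = mulT (piOm g) (piOm h).
Proof. by apply/ffunP=> c; rewrite !ffunE. Qed.
Lemma pi_invT (g : tupleT Om) : piOm (invT g) = invT (piOm g).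
Proof. by apply/ffunP=> c; rewrite !ffunE. Qed.
Lemma pi_oneT : piOm (oneT Om) = oneT Q.
Proof. by apply/ffunP=> c; rewrite !ffunE. Qed.
Lemma pi_conjT (g h : tupleT Om) : piOm (conjT g h) = conjT (piOm g) (piOm h).
Proof. by apply/ffunP=> c; rewrite !ffunE. Qed.

Variables (X : tupleT Q) (H : {set tupleT Q}).
Hypotheses (HX : X \in EndQ Q) (HH : isSubgroupAut H)
  (Hfix : forall g, g \in H -> conjT g X = X).

Definition gl (h : tupleT Q) (K : 'M[F]_(mb, ma)) := ext h (sh (h a) K (h b)).
Definition Yf (C : 'M[F]_(mb, ma)) := ext X (sh (X a) C (X b)).

Lemma Hunit h c : h \in H -> h c \in unitmx.
Proof. by move=> hH; exact: sub_aut_unit HH hH c. Qed.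

Lemma Hcomm h c : h \in H -> X c *m h c = h c *m X c.
Proof.
move=> hH; have := congr1 (fun t : tupleT Q => t c) (Hfix hH); rewrite ffunE => e.
by rewrite -{2}e -!mulmxA mulKVmx ?Hunit.
Qed.

Lemma glM h K h' K' :
  mulT (gl h K) (gl h' K') = gl (mulT h h') (K' *m h a + h' b *m K).
Proof.
apply/ffunP=> -[c|]; rewrite !ffunE //.
by rewrite shM.
Qed.

Lemma gl1 : gl (oneT Q) 0 = oneT Om.
Proof. by apply/ffunP=> -[c|]; rewrite !ffunE // sh1. Qed.

Lemma gl_aut h K : h \in H -> gl h K \in AutQ Om.
Proof.
move=> hH; case: (HH) => sHA H1 HM HV.
have hA := subsetP sHA h hH; case/autP: (hA) => hE hiE hu.
have glE h0 K0 : h0 \in H -> gl h0 K0 \in EndQ Om.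
  move=> h0H; rewrite endOm /gl pi_ext !ext_Some !ext_None sh_i sh_p !eqxx andbT.
  by rewrite andbT; case/autP: (subsetP sHA h0 h0H).
rewrite inE glE //=; apply/existsP.
exists (gl (invT h) (- (invmx (h b) *m K *m invmx (h a)))).
rewrite glE ?HV //= !glM mulTV // mulVT //.
rewrite !ffunE mulNmx -!mulmxA mulVmx // mulmx1 addNr.
by rewrite mulmxN !mulmxA mulmxV // mul1mx addrN gl1 eqxx.
Qed.

Lemma decomp (Y : tupleT Om) : Y \in EndQ Om ->
  Y = ext (piOm Y) (sh (piOm Y a) (s *m Y None *m r) (piOm Y b)).
Proof.
rewrite endOm => /and3P[_ /eqP e1 /eqP e2].
rewrite {1}(ext_eta Y); congr ext; apply: sh_eq; rewrite ffunE; by [rewrite e1|rewrite e2].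
Qed.

Definition glp (hK : tupleT Q * 'M[F]_(mb, ma)) := gl hK.1 hK.2.

Lemma glp_inj : injective glp.
Proof.
move=> [h K] [h' K'] /= e.
have eh : h = h' by have := congr1 (fun t : tupleT Om => piOm t) e; rewrite /gl !pi_ext.
have := congr1 (fun t : tupleT Om => t None) e; rewrite /= !ffunE => /sh_inj[_ eK _].
by rewrite eh; move: eK => /= ->.
Qed.

Lemma lift_char : liftGroup i p H = glp @: setX H [set: 'M[F]_(mb, ma)].
Proof.
apply/setP=> g; rewrite inE; apply/andP/imsetP=> [[gA gH]|[[h K] /setXP[hH _] ->]].
  exists (piOm g, s *m g None *m r); first by rewrite in_setX gH inE.
  by rewrite /glp /gl /=; apply: decomp; case/autP: gA.
by rewrite /glp /= gl_aut // /gl pi_ext.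
Qed.

Lemma Yf_inj : injective Yf.
Proof.
move=> C C' e; have := congr1 (fun t : tupleT Om => t None) e; rewrite /= !ffunE.
by case/sh_inj.
Qed.

Lemma fibre_char : fibre i p X = Yf @: [set: 'M[F]_(mb, ma)].
Proof.
apply/setP=> Y; rewrite inE; apply/andP/imsetP=> [[YE /eqP YX]|[C _ ->]].
  by exists (s *m Y None *m r) => //; rewrite /Yf {1}(decomp YE) YX.
split; last by rewrite /Yf pi_ext.
by rewrite endOm /Yf pi_ext !ext_Some !ext_None sh_i sh_p HX !eqxx.
Qed.

Lemma Hfixc h c : h \in H -> invmx (h c) *m (X c *m h c) = X c.
Proof.
move=> hH; have := congr1 (fun t : tupleT Q => t c) (Hfix hH); rewrite ffunE => e.
by rewrite mulmxA.
Qed.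

Lemma conj_gl h K C : h \in H ->
  conjT (gl h K) (Yf C) = Yf (invmx (h b) *m (C *m h a + X b *m K - K *m X a)).
Proof.
move=> hH; apply/ffunP=> -[c|]; rewrite !ffunE.
  by rewrite -mulmxA Hfixc.
have hau := Hunit a hH; have hbu := Hunit b hH.
have -> : invmx (sh (h a) K (h b)) =
    sh (invmx (h a)) (- (invmx (h b) *m K *m invmx (h a))) (invmx (h b)).
  apply: inv_uniq; rewrite shM !mulmxV // mulmxN !mulmxA mulmxV // mul1mx addrN.
  exact: sh1.
rewrite !shM -!mulmxA !Hfixc //; congr sh.
rewrite !mulmxDl !mulNmx -!mulmxA Hfixc // !mulmxDr.
by rewrite mulmxN [RHS]addrC addrA.
Qed.

Lemma fix_cond h K C : h \in H ->
  (conjT (gl h K) (Yf C) == Yf C) = (X b *m K - K *m X a == h b *m C - C *m h a).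
Proof.
move=> hH; have hbu := Hunit b hH.
rewrite conj_gl // (inj_eq Yf_inj); apply/eqP/eqP=> e.
  by rewrite -{1}e mulKVmx // addrAC [C *m h a + _]addrC addrK.
by rewrite -addrA e addrCA subrr addr0 mulKmx.
Qed.

Local Notation N := (mb * ma)%N.

Definition Lmx (P : 'M[F]_mb) (R : 'M[F]_ma) : 'M[F]_(N, N) :=
  lin_mx (mulmx P : 'M[F]_(mb, ma) -> 'M[F]_(mb, ma))
  - lin_mx (mulmxr R : 'M[F]_(mb, ma) -> 'M[F]_(mb, ma)).

Lemma Lmx_vec P R K : mxvec K *m Lmx P R = mxvec (P *m K - K *m R).
Proof. by rewrite mulmxBr !mul_vec_lin linearB. Qed.

Lemma card_bij (T1 T2 : finType) (f : T1 -> T2) (P : pred T2) :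
  bijective f -> #|[set y | P y]| = #|[set x | P (f x)]|.
Proof.
move=> fb; rewrite -(card_imset _ (bij_inj fb)).
suff -> : [set y | P y] = f @: [set x | P (f x)] by [].
apply/setP=> y.
rewrite inE; apply/idP/imsetP=> [Py|[x]]; last by rewrite inE => ? ->.
by case: fb => g fg gf; exists (g y); rewrite ?inE gf.
Qed.

Lemma card_pairs (T1 T2 : finType) (P : T1 -> T2 -> bool) :
  #|[set x : T1 * T2 | P x.1 x.2]| = (\sum_(k : T1) #|[set c | P k c]|)%N.
Proof.
rewrite -sum1_card (eq_bigl (fun x : T1 * T2 => P x.1 x.2)); last by move=> x; rewrite inE.
rewrite big_mkcond /= -(pair_bigA _ (fun k c => if P k c then 1%N else 0%N)) /=.
apply: eq_bigr => k _; rewrite -sum1_card big_mkcond /=.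
by rewrite [RHS]big_mkcond /=; apply: eq_bigr => c _; rewrite inE.
Qed.

Definition AA (h : tupleT Q) : 'M[F]_(N + N, N) :=
  col_mx (Lmx (X b) (X a)) (- Lmx (h b) (h a)).

Lemma ker_count h :
  #|[set v : 'rV[F]_(N + N) | v *m AA h == 0]| =
  (\sum_(K : 'M[F]_(mb, ma)) #|[set C | (X b *m K - K *m X a == h b *m C - C *m h a)%R]|)%N.
Proof.
rewrite -card_pairs.
pose f (x : 'M[F]_(mb, ma) * 'M[F]_(mb, ma)) : 'rV[F]_(N + N) := row_mx (mxvec x.1) (mxvec x.2).
have fb : bijective f.
  exists (fun v => (vec_mx (lsubmx v), vec_mx (rsubmx v))).
    by move=> [K C]; rewrite /f /= row_mxKl row_mxKr !mxvecK.
  by move=> v; rewrite /f /= !vec_mxK hsubmxK.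
rewrite (card_bij _ fb); apply: eq_card => -[K C]; rewrite !inE /f /=.
rewrite mul_row_col Lmx_vec mulmxN Lmx_vec -linearB /=.
by rewrite -[RHS]subr_eq0 -[RHS](inj_eq (can_inj (@mxvecK F mb ma))) linear0.
Qed.

Lemma scal1_eq0 (x : F) : ((x%:M : 'M[F]_1) == 0) = (x == 0).
Proof.
apply/eqP/eqP=> [e|->]; last by rewrite raddf0.
by have := congr1 (fun M : 'M[F]_1 => M 0 0) e; rewrite !mxE eqxx mulr1n.
Qed.

Lemma row_mx_eq0' m n1 n2 (x : 'M[F]_(m, n1)) (y : 'M[F]_(m, n2)) :
  (row_mx x y == 0) = (x == 0) && (y == 0).
Proof.
rewrite -row_mx0; apply/eqP/andP=> [e|[/eqP-> /eqP->]] //.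
by case: (eq_row_mx e) => -> ->.
Qed.

Lemma ker_tr n (A : 'M[F]_(N, n)) (u : 'rV[F]_n) :
  (u *m A^T == 0) = [forall K : 'M[F]_(mb, ma), mxvec K *m A *m u^T == 0].
Proof.
apply/eqP/forallP=> [e K|hK].
  by rewrite -mulmxA -[A](trmxK A) -trmx_mul e trmx0 mulmx0.
apply: trmx_inj; rewrite trmx_mul trmxK trmx0; apply/row_matrixP=> k.
rewrite row0 rowE mulmxA; have := hK (vec_mx (delta_mx 0 k)); rewrite vec_mxK.
by move/eqP.
Qed.

Lemma trace_cond (P : 'M[F]_mb) (Q' : 'M[F]_ma) (R : 'M[F]_(ma, mb)) :
  [forall K : 'M[F]_(mb, ma), \tr ((P *m K - K *m Q') *m R) == 0] = (R *m P == Q' *m R).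
Proof.
have e K : \tr ((P *m K - K *m Q') *m R) = \tr (K *m (R *m P - Q' *m R)).
  rewrite mulmxBl mulmxBr !raddfB /= -mulmxA mxtrace_mulC -!mulmxA.
  by [].
apply/forallP/eqP=> [h|h K].
  apply/eqP; rewrite -subr_eq0; apply/eqP; apply: trace_zero => K.
  by apply/eqP; rewrite -e.
by rewrite e h subrr mulmx0 mxtrace0.
Qed.

Lemma vec_cond (P : 'M[F]_mb) (Q' : 'M[F]_ma) (R : 'M[F]_(ma, mb)) :
  [forall K : 'M[F]_(mb, ma), mxvec K *m Lmx P Q' *m (mxvec R^T)^T == 0] = (R *m P == Q' *m R).
Proof.
rewrite -trace_cond; apply: eq_forallb => K.
by rewrite Lmx_vec vec_pair trmxK scal1_eq0.
Qed.

Lemma dual_count h : h \in H ->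
  #|[set u : 'rV[F]_N | u *m (AA h)^T == 0]| = #|[set R in Iset X a b | actI h R == R]|.
Proof.
move=> hH; have hau := Hunit a hH.
pose f (R : 'M[F]_(ma, mb)) : 'rV[F]_N := mxvec R^T.
have fb : bijective f.
  by exists (fun u => (vec_mx u)^T) => [R|u]; rewrite /f ?mxvecK ?trmxK ?vec_mxK.
rewrite (card_bij _ fb); apply: eq_card => R; rewrite !inE /f.
rewrite /AA tr_col_mx mul_mx_row row_mx_eq0' !ker_tr vec_cond.
have -> : [forall K : 'M[F]_(mb, ma), mxvec K *m - Lmx (h b) (h a) *m (mxvec R^T)^T == 0]
   = [forall K : 'M[F]_(mb, ma), mxvec K *m Lmx (h b) (h a) *m (mxvec R^T)^T == 0].
  by apply: eq_forallb => K; rewrite mulmxN mulNmx oppr_eq0.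
rewrite vec_cond eq_sym; congr (_ && _).
rewrite /actI; apply/eqP/eqP=> e; first by rewrite -mulmxA e mulKmx.
by rewrite -[in RHS]e -!mulmxA mulKVmx.
Qed.

Lemma burnside_sub (Q0 : quiverRep F) (G : {set tupleT Q0}) (T : finType)
  (act : tupleT Q0 -> T -> T) (S : {set T}) :
  isSubgroupAut G ->
  (forall g h x, g \in G -> h \in G -> x \in S -> act (mulT g h) x = act g (act h x)) ->
  (forall x, x \in S -> act (oneT Q0) x = x) ->
  (forall g x, g \in G -> x \in S -> act g x \in S) ->
  (norbits G act S * #|G| = \sum_(g in G) #|[set x in S | act g x == x]|)%N.
Proof.
move=> hG actM act1 actS; have hG' := hG; case: hG' => sGA G1 GM GV.
apply: (burnside (mul := @mulT F Q0) (inv := @invT F Q0) (one := oneT Q0)) => //.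
- by move=> *; exact: mulTA.
- by move=> *; exact: mul1T.
- by move=> g gG; apply: mulVT; exact: sub_aut_unit hG gG.
- by move=> g gG; apply: mulTV; exact: sub_aut_unit hG gG.
Qed.

Lemma L_sub : isSubgroupAut (liftGroup i p H).
Proof.
case: (HH) => sHA H1 HM HV; split.
- by apply/subsetP=> g; rewrite inE => /andP[].
- by rewrite [_ \in _]inE aut1 pi_oneT H1.
- move=> g h /setIdP[gA gH] /setIdP[hA hH].
  by rewrite inE autM // pi_mulT HM.
- by move=> g /setIdP[gA gH]; rewrite inE autV // pi_invT HV.
Qed.

Lemma Hcomm_inv h c : h \in H -> invmx (h c) *m X c = X c *m invmx (h c).
Proof.
move=> hH; rewrite -{2}(Hfixc c hH) -!mulmxA mulmxV ?mulmx1 //; exact: Hunit.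
Qed.

Lemma qpos k : (0 < #|F| ^ k)%N.
Proof. by rewrite expn_gt0; apply/orP; left; apply/card_gt0P; exists 0. Qed.

Lemma sumL :
  (\sum_(g in liftGroup i p H) #|[set Y in fibre i p X | conjT g Y == Y]| =
   \sum_(h in H) #|[set R in Iset X a b | actI h R == R]| * #|F| ^ N)%N.
Proof.
rewrite lift_char big_imset /=; last by move=> x y _ _; exact: glp_inj.
rewrite (eq_bigl (fun x => (x.1 \in H) && (x.2 \in [set: 'M[F]_(mb, ma)]))); last first.
  by case=> h K; rewrite in_setX.
rewrite -(pair_big (fun h => h \in H) (fun K => K \in [set: 'M[F]_(mb, ma)])
   (fun h K => #|[set Y in fibre i p X | conjT (glp (h, K)) Y == Y]|)) /=.
apply: eq_bigr => h hH.
have e1 K : #|[set Y in fibre i p X | conjT (glp (h, K)) Y == Y]| =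
    #|[set C | (X b *m K - K *m X a == h b *m C - C *m h a)%R]|.
  rewrite fibre_char.
  have -> : [set Y in Yf @: [set: 'M[F]_(mb, ma)] | conjT (glp (h, K)) Y == Y] =
      Yf @: [set C | (X b *m K - K *m X a == h b *m C - C *m h a)%R].
    apply/setP=> Y; rewrite inE; apply/andP/imsetP=> [[/imsetP[C _ ->] fx]|[C]].
      by exists C => //; rewrite inE -fix_cond.
    rewrite inE => cC ->; split; first by apply/imsetP; exists C.
    by rewrite /glp /= fix_cond.
  by rewrite card_imset //; exact: Yf_inj.
rewrite (eq_bigr _ (fun K _ => e1 K)) /=.
rewrite (eq_bigl xpredT); last by move=> K; rewrite inE.
rewrite -ker_count -dual_count //.
apply/eqP; rewrite -(eqn_pmul2r (qpos N)) -!mulnA -expnD.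
rewrite dual_card.
by [].
Qed.

Lemma cardL : #|liftGroup i p H| = (#|H| * #|F| ^ N)%N.
Proof.
rewrite lift_char card_imset; last exact: glp_inj.
by rewrite cardsX cardsT card_mx.
Qed.

Lemma main_eq :
  norbits (liftGroup i p H) (@conjT F Om) (fibre i p X) = norbits H (@actI F Q a b) (Iset X a b).
Proof.
have BL := burnside_sub (act := @conjT F Om) (S := fibre i p X) L_sub.
have BH := burnside_sub (act := @actI F Q a b) (S := Iset X a b) HH.
have H1 : oneT Q \in H by case: HH.
have Hpos : (0 < #|H|)%N by apply/card_gt0P; exists (oneT Q).
apply/eqP; rewrite -(eqn_pmul2r (qpos N)) -(eqn_pmul2r Hpos) -!mulnA [(_ ^ _ * _)%N]mulnC.
rewrite -cardL BL.
- rewrite sumL -big_distrl /= -BH.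
  + by rewrite cardL mulnA.
  + move=> g h R gH hH _; rewrite /actI !ffunE.
    have -> : invmx (h a *m g a) = invmx (g a) *m invmx (h a).
      apply: inv_uniq; rewrite -mulmxA (mulmxA (g a)) mulmxV ?Hunit // mul1mx mulmxV //.
      exact: Hunit.
    by rewrite !mulmxA.
  + by move=> R _; rewrite /actI !ffunE invmx1 mul1mx mulmx1.
  + move=> h R hH; rewrite !inE => /eqP e; rewrite /actI.
    by rewrite !mulmxA -Hcomm_inv // -(mulmxA (invmx (h a)) (X a) R) e !mulmxA -(mulmxA (invmx (h a) *m R) (X b) (h b)) Hcomm // !mulmxA eqxx.
- move=> g h Y gL hL _; apply: conjM.
  + by apply: sub_aut_unit L_sub gL.
  + by apply: sub_aut_unit L_sub hL.
- by move=> Y _; exact: conj1.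
- move=> g Y /setIdP[gA gH] /setIdP[YE /eqP YX].
  rewrite inE conj_end //= pi_conjT YX Hfix //.
Qed.
End Main.

Unset Implicit Arguments.

Theorem mainTheorem9 (F : finFieldType) (Q : quiverRep F) (a b : qV Q)
  (i : 'M[F]_(@qdim _ Q a, @qdim _ Q a + @qdim _ Q b))
  (p : 'M[F]_(@qdim _ Q a + @qdim _ Q b, @qdim _ Q b))
  (i_inj : row_free i) (p_surj : row_full p) (exact : (i == kermx p)%MS)
  (X : tupleT Q) (HX : X \in EndQ Q)
  (H : {set tupleT Q}) (HH : isSubgroupAut H)
  (Hfix : forall g, g \in H -> conjT g X = X) :
  norbits (liftGroup i p H) (@conjT F (Omega i p)) (fibre i p X)
  = norbits H (@actI F Q a b) (Iset X a b).
Proof.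
have [r [s [ir ip sr sp rips]]] := splitting i_inj p_surj exact.
exact: (main_eq ir ip sr sp rips HX HH Hfix).
Qed.
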